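(* Let $H$ and $H'$ be hypergraphs. If $H'$ dilutes to $H$ (i.e., $H$ is a hypergraph dilution of $H'$), then $\mathrm{ghw}(H) \leq \mathrm{ghw}(H')$.
   Context: A hypergraph $H$ is a pair $(V(H),E(H))$ with $E(H)\subseteq 2^{V(H)}$ a set of hyperedges (so identical edges coincide). For a vertex $v$, $I_v$ denotes the set of edges containing $v$. A hypergraph $H$ is a hypergraph dilution of $H'$ (equivalently, $H'$ dilutes to $H$) if $H$ is isomorphic to a hypergraph reachable from $H'$ by a finite sequence of the following operations: (1) deleting a vertex (from the vertex set and from all edges); (2) deleting an edge that is a proper subset of another edge; (3) merging on a vertex $v$: replacing all edges in $I_v$ by the single new edge $(\bigcup I_v)\setminus\{v\}$. A tree decomposition of $H$ is a pair $(T,(B_u)_{u\in T})$ with $T$ a tree and $B_u\subseteq V(H)$ such that every edge of $H$ is contained in some $B_u$ and for every vertex $v$ the set $\{u : v\in B_u\}$ is connected in $T$. For $B\subseteq V(H)$, $\rho_H(B)$ is the minimum number of edges of $H$ whose union contains $B$. The generalised hypertree width $\mathrm{ghw}(H)$ is the minimum over all tree decompositions of $\max_u \rho_H(B_u)$. *)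

(* Defs.v *)
From Stdlib Require Import Relations.Relation_Operators.
From mathcomp Require Import all_boot.

Set Implicit Arguments.
Unset Strict Implicit.
Unset Printing Implicit Defensive.

(* A hypergraph over the ambient finite type T: a vertex set V(H) and a set
   of hyperedges E(H) (a set of sets, so identical edges coincide). *)
Record hypergraph (T : finType) := Hypergraph {
  hvert : {set T};
  hedge : {set {set T}} }.

Definition wf_hypergraph (T : finType) (H : hypergraph T) : Prop :=
  forall e, e \in hedge H -> e \subset hvert H.

Definition incident (T : finType) (H : hypergraph T) (v : T) : {set {set T}} :=
  [set e in hedge H | v \in e].

Definition delete_vertex (T : finType) (H : hypergraph T) (v : T) : hypergraph T :=
  Hypergraph (hvert H :\ v) [set e :\ v | e in hedge H].

Definition delete_edge (T : finType) (H : hypergraph T) (e : {set T}) : hypergraph T :=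
  Hypergraph (hvert H) (hedge H :\ e).

Definition merge_vertex (T : finType) (H : hypergraph T) (v : T) : hypergraph T :=
  Hypergraph (hvert H)
    ((hedge H :\: incident H v) :|: [set (\bigcup_(e in incident H v) e) :\ v]).

Inductive dilution_step (T : finType) : hypergraph T -> hypergraph T -> Prop :=
  | DS_delete_vertex H v : v \in hvert H -> dilution_step H (delete_vertex H v)
  | DS_delete_edge H e f : e \in hedge H -> f \in hedge H -> e \proper f ->
      dilution_step H (delete_edge H e)
  | DS_merge H v : v \in hvert H -> dilution_step H (merge_vertex H v).

Definition dilution_reachable (T : finType) : hypergraph T -> hypergraph T -> Prop :=
  clos_refl_trans (hypergraph T) (@dilution_step T).

Definition hg_iso (T1 T2 : finType) (H1 : hypergraph T1) (H2 : hypergraph T2) : Prop :=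
  exists f : T1 -> T2,
    {in hvert H1 &, injective f} /\
    f @: hvert H1 = hvert H2 /\
    hedge H2 = [set f @: (e : {set T1}) | e in hedge H1].

Definition dilutes_to (T' T : finType) (H' : hypergraph T') (H : hypergraph T) : Prop :=
  exists H'' : hypergraph T', dilution_reachable H' H'' /\ hg_iso H H''.

(* A (finite, nonempty) tree on node type I with edge relation t:
   t symmetric and irreflexive, connected, and acyclic (every edge is a
   bridge: removing the edge {x,y} disconnects x from y). *)
Definition is_tree (I : finType) (t : rel I) : Prop :=
  [/\ 0 < #|I|, symmetric t, irreflexive t,
      (forall x y, connect t x y) &
      (forall x y, t x y ->
         ~~ connect [rel a b | t a b && ~~ (((a == x) && (b == y)) || ((a == y) && (b == x)))] x y)].

Definition tree_decomposition (T : finType) (H : hypergraph T)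
    (I : finType) (t : rel I) (B : I -> {set T}) : Prop :=
  [/\ is_tree t,
      (forall u, B u \subset hvert H),
      (forall e, e \in hedge H -> exists u, e \subset B u) &
      (forall v, v \in hvert H -> forall u w, v \in B u -> v \in B w ->
         connect [rel a b | t a b && (v \in B a) && (v \in B b)] u w)].

Definition rho_le (T : finType) (H : hypergraph T) (B : {set T}) (k : nat) : Prop :=
  exists F : {set {set T}}, [/\ F \subset hedge H, #|F| <= k & B \subset \bigcup_(e in F) e].

Definition ghw_le (T : finType) (H : hypergraph T) (k : nat) : Prop :=
  exists (I : finType) (t : rel I) (B : I -> {set T}),
    tree_decomposition H t B /\ forall u, rho_le H (B u) k.

(* Main.v *)
Require Import Defs.
From Stdlib Require Import Relations.Relation_Operators.
From mathcomp Require Import all_boot.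

Set Implicit Arguments.
Unset Strict Implicit.
Unset Printing Implicit Defensive.

Lemma connect_union (I : finType) (t : rel I) (P Q : pred I) u0 :
  symmetric t -> P u0 -> Q u0 ->
  (forall a b, P a -> P b -> connect [rel x y | t x y && P x && P y] a b) ->
  (forall a b, Q a -> Q b -> connect [rel x y | t x y && Q x && Q y] a b) ->
  forall a b, P a || Q a -> P b || Q b ->
   connect [rel x y | t x y && (P x || Q x) && (P y || Q y)] a b.
Proof.
move=> st Pu Qu cP cQ.
set R := [rel x y | t x y && (P x || Q x) && (P y || Q y)].
have symR : connect_sym R.
  apply: sym_connect_sym => x y /=; rewrite st; do 2 case: (_ || _); 
  by rewrite ?andbF ?andbT.
have toU : forall a, P a || Q a -> connect R a u0.
  move=> a /orP [Pa|Qa].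
    apply: connect_sub (cP _ _ Pa Pu) => x y /= /andP [/andP [txy Px] Py].
    by apply: connect1; rewrite /= txy Px Py.
  apply: connect_sub (cQ _ _ Qa Qu) => x y /= /andP [/andP [txy Qx] Qy].
  by apply: connect1; rewrite /= txy Qx Qy !orbT.
move=> a b Ha Hb; apply: connect_trans (toU _ Ha) _.
by rewrite symR; apply: toU.
Qed.

Lemma ghw_delv T (H : hypergraph T) v k :
  ghw_le H k -> ghw_le (delete_vertex H v) k.
Proof.
case=> I [t [B [[tr sub cov con] rh]]].
exists I, t, (fun u => B u :\ v); split; first split => //.
- move=> u /=; exact: setSD.
- move=> e' /imsetP [e he ->]; have [u hu] := cov e he; exists u; exact: setSD.
- move=> w /setD1P [wv wH] u u' /setD1P [_ wu] /setD1P [_ wu'].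
  have := con w wH u u' wu wu'.
  rewrite (@eq_connect _ _ [rel a b | t a b && (w \in B a :\ v) && (w \in B b :\ v)]) //.
  by move=> a b /=; rewrite !in_setD1 wv.
move=> u; have [F [FH Fk Fc]] := rh u.
exists [set e :\ v | e in F]; split.
- apply/subsetP => e' /imsetP [e eF ->]; apply/imsetP; exists e => //; exact: (subsetP FH).
- exact: leq_trans (leq_imset_card _ _) Fk.
- apply/subsetP => x /setD1P [xv xB]. have /bigcupP [e eF xe] := subsetP Fc x xB.
  apply/bigcupP; exists (e :\ v); first by apply/imsetP; exists e.
  by rewrite in_setD1 xv.
Qed.

Lemma ghw_dele T (H : hypergraph T) (e f : {set T}) k :
  f \in hedge H -> e \proper f ->
  ghw_le H k -> ghw_le (delete_edge H e) k.
Proof.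
move=> fH ef.
case=> I [t [B [[tr sub cov con] rh]]].
exists I, t, B; split; first split => //.
- by move=> e' /setD1P [_ he]; apply: cov.
move=> u; have [F [FH Fk Fc]] := rh u.
have fe : f != e by apply/eqP => fe; rewrite fe properxx in ef.
exists [set (if g == e then f else g) | g in F]; split.
- apply/subsetP => e' /imsetP [g gF ->]; case: eqP => [_|/eqP ge].
    by rewrite /= in_setD1 fe fH.
  by rewrite /= in_setD1 ge (subsetP FH).
- exact: leq_trans (leq_imset_card _ _) Fk.
- apply/subsetP => x xB. have /bigcupP [g gF xg] := subsetP Fc x xB.
  apply/bigcupP; exists (if g == e then f else g); first by apply/imsetP; exists g.
  case: eqP => // ge; subst g; exact: (subsetP (proper_sub ef)).
Qed.
Lemma ghw_merge T (H : hypergraph T) v k :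
  wf_hypergraph H -> ghw_le H k -> ghw_le (merge_vertex H v) k.
Proof.
move=> wfH.
case=> I [t [B [[tr sub cov con] rh]]].
set m := (\bigcup_(e in incident H v) e) :\ v.
have mH : m \subset hvert H.
  apply/subsetP => x /setD1P [_ /bigcupP [e]]; rewrite inE => /andP [eH _] xe.
  exact: (subsetP (wfH _ eH)).
have vm : v \notin m by rewrite !inE eqxx.
have inm : forall e x, e \in hedge H -> v \in e -> x \in e -> x != v -> x \in m.
  move=> e x eH ve xe xv; rewrite in_setD1 xv /=; apply/bigcupP; exists e => //.
  by rewrite inE eH ve.
pose B' u := if v \in B u then (B u :\ v) :|: m else B u.
have tr' := tr; case: tr' => I0 tsym _ _ _.
exists I, t, B'; split; first split => //.
- move=> u; rewrite /B'; case: ifP => _; last exact: sub.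
  by rewrite subUset mH andbT; apply: subset_trans (sub u); apply: subD1set.
- move=> e' /=; rewrite in_setU => /orP [/setDP [eH]|].
    rewrite inE eH /= => ve; have [u hu] := cov e' eH; exists u; rewrite /B'.
    case: ifP => _ //; apply: subset_trans (subsetUl _ _).
    apply/subsetP => x xe; rewrite in_setD1 (subsetP hu _ xe) andbT.
    by apply: contraNneq ve => <-.
  rewrite inE => /eqP ->; rewrite -/m.
  case: (set_0Vmem (incident H v)) => [I0e|[e]].
    have -> : m = set0.
      by apply/setP => x; rewrite /m I0e big_set0 !inE andbF.
    case/card_gt0P: I0 => u _; exists u; exact: sub0set.
  rewrite inE => /andP [eH ve]; have [u hu] := cov e eH; exists u.
  by rewrite /B' (subsetP hu _ ve) subsetUr.
- move=> x xH u w.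
  have [->|xv] := eqVneq x v.
    by rewrite /B'; case: ifP => [_|->]; rewrite // in_setU in_setD1 eqxx (negbTE vm).
  have [xm|xnm] := boolP (x \in m).
    have E : forall a, (x \in B' a) = (x \in B a) || (v \in B a).
      move=> a; rewrite /B'; case: ifP => va; last by rewrite orbF.
      by rewrite in_setU in_setD1 xv xm !orbT.
    rewrite !E => hu hw.
    move: (xm); rewrite in_setD1 => /andP [_ /bigcupP [e]].
    rewrite inE => /andP [eH ve] xe.
    have [u0 hu0] := cov e eH.
    have vH : v \in hvert H by apply: (subsetP (wfH _ eH)).
    have xH2 : x \in hvert H by apply: (subsetP (wfH _ eH)).
    have := connect_union (P := fun a => x \in B a) (Q := fun a => v \in B a) tsym
      (subsetP hu0 _ xe) (subsetP hu0 _ ve) (con x xH2) (con v vH) hu hw.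
    rewrite (@eq_connect _ _ [rel a b | t a b && (x \in B' a) && (x \in B' b)]) //.
    by move=> a b /=; rewrite !E.
  have E : forall a, (x \in B' a) = (x \in B a).
    move=> a; rewrite /B'; case: ifP => va //.
    by rewrite in_setU in_setD1 xv (negbTE xnm) orbF.
  rewrite !E => hu hw.
  have := con x xH u w hu hw.
  rewrite (@eq_connect _ _ [rel a b | t a b && (x \in B' a) && (x \in B' b)]) //.
  by move=> a b /=; rewrite !E.
move=> u; have [F [FH Fk Fc]] := rh u.
exists [set (if v \in g then m else g) | g : {set T} in F]; split.
- apply/subsetP => e' /imsetP [g gF ->]; case: ifP => vg.
    by rewrite /= in_setU in_set1 eqxx orbT.
    by rewrite /= in_setU in_setD inE (subsetP FH _ gF) inE vg andbF.
- exact: leq_trans (leq_imset_card _ _) Fk.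
- have C1 : forall y, y != v -> y \in B u -> 
     y \in \bigcup_(e in [set (if v \in g then m else g) | g : {set T} in F]) e.
    move=> y yv yB; have /bigcupP [g gF yg] := subsetP Fc y yB.
    apply/bigcupP; exists (if v \in g then m else g); first by apply/imsetP; exists g.
    case: ifP => // vg; exact: inm (subsetP FH _ gF) vg yg yv.
  apply/subsetP => y; rewrite /B'; case: ifP => vB; last first.
    by move=> yB; apply: C1 => //; apply: contraFneq vB => <-.
  rewrite in_setU in_setD1 => /orP [/andP [yv yB]|ym]; first exact: C1.
  have /bigcupP [g gF vg] := subsetP Fc v vB.
  apply/bigcupP; exists m => //; apply/imsetP; exists g => //; by rewrite vg.
Qed.
Lemma ghw_iso (T1 T2 : finType) (H1 : hypergraph T1) (H2 : hypergraph T2) k :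
  wf_hypergraph H1 -> hg_iso H1 H2 -> ghw_le H2 k -> ghw_le H1 k.
Proof.
move=> wf1 [f [finj [fV fE]]].
case=> I [t [B [[tr sub cov con] rh]]].
pose B1 u := [set x in hvert H1 | f x \in B u].
have inj2 : {in hedge H1 &, injective (fun e : {set T1} => f @: e)}.
  have half : forall e1 e2, e1 \in hedge H1 -> e2 \in hedge H1 -> f @: e1 = f @: e2 ->
      e1 \subset e2.
    move=> e1 e2 h1 h2 E; apply/subsetP => x xe.
    have : f x \in f @: e2 by rewrite -E imset_f.
    case/imsetP => y ye fxy.
    by rewrite (finj x y (subsetP (wf1 _ h1) _ xe) (subsetP (wf1 _ h2) _ ye) fxy).
  move=> e1 e2 h1 h2 E; apply/eqP; rewrite eqEsubset.
  by rewrite (half _ _ h1 h2 E) (half _ _ h2 h1 (esym E)).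
exists I, t, B1; split; first split => //.
- by move=> u; apply/subsetP => x; rewrite inE => /andP [].
- move=> e eH; have : f @: e \in hedge H2 by rewrite fE imset_f.
  case/cov => u hu; exists u; apply/subsetP => x xe.
  by rewrite inE (subsetP (wf1 _ eH) _ xe) (subsetP hu) // imset_f.
- move=> x xH u w; rewrite !inE xH /= => hu hw.
  have fxH : f x \in hvert H2 by rewrite -fV imset_f.
  have := con _ fxH u w hu hw.
  rewrite (@eq_connect _ _ [rel a b | t a b && (x \in B1 a) && (x \in B1 b)]) //.
  by move=> a b /=; rewrite !inE xH.
move=> u; have [F [FH Fk Fc]] := rh u.
exists [set e in hedge H1 | f @: e \in F]; split.
- by apply/subsetP => e; rewrite inE => /andP [].
- rewrite -(card_in_imset (f := fun e : {set T1} => f @: e)); last first.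
    by move=> e1 e2; rewrite !inE => /andP [h1 _] /andP [h2 _]; apply: inj2.
  apply: leq_trans Fk; apply: subset_leq_card; apply/subsetP => g.
  by case/imsetP => e; rewrite inE => /andP [_ eF] ->.
- apply/subsetP => x; rewrite inE => /andP [xH fxB].
  have /bigcupP [g gF fxg] := subsetP Fc _ fxB.
  have : g \in hedge H2 by apply: (subsetP FH).
  rewrite fE => /imsetP [e eH ge]; subst g.
  case/imsetP: fxg => y ye fxy.
  apply/bigcupP; exists e; first by rewrite inE eH gF.
  by rewrite (finj x y xH (subsetP (wf1 _ eH) _ ye) fxy).
Qed.

Lemma step_ok T (H1 H2 : hypergraph T) k :
  dilution_step H1 H2 -> wf_hypergraph H1 -> ghw_le H1 k ->
  wf_hypergraph H2 /\ ghw_le H2 k.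
Proof.
case=> {H1 H2} [H v _|H e f _ fH ef|H v _] wf g.
- split; last exact: ghw_delv.
  move=> e' /imsetP [e eH ->]; exact: setSD (wf _ eH).
- split; last exact: ghw_dele fH ef g.
  by move=> e' /setD1P [_ h]; apply: wf.
- split; last exact: ghw_merge.
  move=> e'; rewrite /= in_setU => /orP [/setDP [eH _]|]; first exact: wf.
  rewrite in_set1 => /eqP ->; apply/subsetP => x /setD1P [_ /bigcupP [e]].
  rewrite inE => /andP [eH _] xe; exact: (subsetP (wf _ eH)).
Qed.

Lemma steps_ok T (H1 H2 : hypergraph T) k :
  dilution_reachable H1 H2 -> wf_hypergraph H1 -> ghw_le H1 k ->
  wf_hypergraph H2 /\ ghw_le H2 k.
Proof.
elim=> {H1 H2} [H1 H2 s|H|H1 H2 H3 _ IH1 _ IH2] wf g.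
- exact: step_ok s wf g.
- by split.
- have [wf2 g2] := IH1 wf g; exact: IH2.
Qed.

Theorem theorem3p2 (T T' : finType) (H : hypergraph T) (H' : hypergraph T') :
  wf_hypergraph H -> wf_hypergraph H' -> dilutes_to H' H ->
  forall k : nat, ghw_le H' k -> ghw_le H k.
Proof.
move=> wfH wfH' [H'' [r iso]] k g.
have [_ g''] := steps_ok r wfH' g.
exact: ghw_iso wfH iso g''.
Qed.
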